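(* Let $M_G$ be a mixed graph of order $n$ and write $\det(xI-N(M_G))=x^n+c_1x^{n-1}+\dots+c_{n-1}x+c_n$. Then for each $k$, $$c_k=\sum_{M_{G'}}(-1)^{-k+r(G')+l_{sn}(M_{G'})+l_n(M_{G'})}\cdot 2^{l_p(M_{G'})+l_n(M_{G'})},$$ where the sum runs over all elementary mixed subgraphs $M_{G'}$ of $M_G$ with $k$ vertices, $G'$ is the underlying graph of $M_{G'}$, and $l_p(M_{G'}),l_n(M_{G'}),l_{sn}(M_{G'})$ are the numbers of positive, negative and semi-negative mixed cycles in $M_{G'}$, respectively.
   Context: A mixed graph $M_G$ is obtained from a finite simple graph $G$ by orienting the edges of some subset of $E(G)$. With $\omega=\frac{1+\mathbf{i}\sqrt3}{2}$, $N(M_G)=(n_{st})$ has entry $\omega$ for an arc from $u_s$ to $u_t$, $\bar\omega$ for an arc from $u_t$ to $u_s$, $1$ for an undirected edge, $0$ otherwise. A mixed subgraph keeps the directions of $M_G$. A mixed cycle is a mixed graph whose underlying graph is a cycle; for a mixed cycle $v_1v_2\cdots v_lv_1$ its weight (in that direction) is $n_{12}n_{23}\cdots n_{(l-1)l}n_{l1}$. A mixed cycle is positive if its weight is $1$, negative if $-1$, semi-positive if its weight is in $\{\omega,\bar\omega\}$, semi-negative if in $\{-\omega,-\bar\omega\}$ (these notions do not depend on the direction). An elementary mixed graph is one in which every component is a single edge (directed or not) or a mixed cycle. For a simple graph $H$, $r(H)=|V(H)|-t(H)$ where $t(H)$ is the number of components. *)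

(* Defs.v *)
From mathcomp Require Import all_boot all_order all_algebra all_field.
Set Implicit Arguments. Unset Strict Implicit. Unset Printing Implicit Defensive.
Import Order.TTheory GRing.Theory Num.Theory.
Local Open Scope ring_scope.

Definition omega : algC := (1 + 'i * sqrtC 3) / 2.

Section MixedGraph.
Variable n : nat.

(* A mixed graph on vertices 'I_n: underlying simple graph [adj]
   (symmetric, irreflexive) and a set of arcs [arc] (arc u v = arc from u to v),
   each arc lying on an edge, at most one orientation per edge. *)
Definition mixed_graph (adj arc : rel 'I_n) : Prop :=
  [/\ forall u v, adj u v = adj v u,
      forall u, ~~ adj u u,
      forall u v, arc u v -> adj u v &
      forall u v, arc u v -> ~~ arc v u].

Definition Nmat (adj arc : rel 'I_n) : 'M[algC]_n :=
  \matrix_(s, t) (if arc s t then omega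
                  else if arc t s then omega^*
                  else if adj s t then 1 else 0).

Definition edgeset (adj : rel 'I_n) : {set {set 'I_n}} :=
  [set e : {set 'I_n} | [exists u, exists v, adj u v && (e == [set u; v])]].

(* A (mixed) subgraph without isolated vertices is given by its edge set F. *)
Definition fadj (F : {set {set 'I_n}}) : rel 'I_n :=
  fun u v => [set u; v] \in F.

Definition Vset (F : {set {set 'I_n}}) : {set 'I_n} :=
  [set v | [exists u, fadj F u v]].

Definition comps (F : {set {set 'I_n}}) : {set {set 'I_n}} :=
  [set [set w | connect (fadj F) v w] | v in Vset F].

Definition cyc_seq (F : {set {set 'I_n}}) (C : {set 'I_n}) (s : seq 'I_n) : bool :=
  [&& uniq s, (3 <= size s)%N, [set x in s] == C &
      [forall x in C, forall y in C,
         fadj F x y == ((y == next s x) || (x == next s y))]].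

Definition cyc_weight (N : 'M[algC]_n) (s : seq 'I_n) : algC :=
  \prod_(x <- s) N x (next s x).

Definition elementary (F : {set {set 'I_n}}) : bool :=
  [forall C in comps F,
     (#|C| == 2)%N || [exists t : (#|C|).-tuple 'I_n, cyc_seq F C t]].

Definition ncyc (N : 'M[algC]_n) (F : {set {set 'I_n}}) (W : pred algC) : nat :=
  #|[set C in comps F |
      [exists t : (#|C|).-tuple 'I_n, cyc_seq F C t && W (cyc_weight N t)]]|.

Definition l_p N F := ncyc N F (fun w => w == 1).
Definition l_n N F := ncyc N F (fun w => w == -1).
Definition l_sn N F := ncyc N F (fun w => (w == - omega) || (w == - omega^*)).

Definition rk (F : {set {set 'I_n}}) : int := #|Vset F|%:Z - #|comps F|%:Z.

End MixedGraph.

(* Main.v *)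
Require Import Defs.
From mathcomp Require Import all_boot all_order all_algebra all_field all_fingroup.
From mathcomp Require Import zify ring lra.
Set Implicit Arguments. Unset Strict Implicit. Unset Printing Implicit Defensive.
Import Order.TTheory GRing.Theory Num.Theory.
Local Open Scope ring_scope.

Lemma coef_char_term (R : comRingType) (n : nat) (A : 'M[R]_n) (s : 'S_n) :
  (forall i, A i i = 0) ->
  (-1) ^+ s * \prod_i char_poly_mx A i (s i) =
  ((-1) ^+ s * \prod_(i | s i != i) - A i (s i)) *: 'X^(n - #|[set i | s i != i]|).
Proof.
move=> A0.
rewrite (bigID (fun i => s i != i)) /= mulrA.
have -> : \prod_(i | ~~ (s i != i)) char_poly_mx A i (s i) = 'X^(n - #|[set i | s i != i]|).
  set S := [set i | s i != i].
  have hc : #|~: S| = (n - #|S|)%N.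
    by have := cardsC S; rewrite card_ord; lia.
  rewrite -hc -prodr_const; apply: eq_big => [i|i]; first by rewrite !inE.
  by rewrite negbK => /eqP ->; rewrite !mxE eqxx A0 subr0.
rewrite -mul_polyC; congr (_ * _).
rewrite rmorphM rmorph_prod /=; congr (_ * _); first by rewrite rmorphXn rmorphN1.
apply: eq_bigr => i si; rewrite !mxE eq_sym (negbTE si) /= sub0r rmorphN.
by [].
Qed.

Lemma coef_char (R : comRingType) (n : nat) (A : 'M[R]_n) (k : nat) :
  (forall i, A i i = 0) -> (k <= n)%N ->
  (char_poly A)`_(n - k) =
  \sum_(s : 'S_n | #|[set i | s i != i]| == k)
     (-1) ^+ s * (-1) ^+ k * \prod_(i | s i != i) A i (s i).
Proof.
move=> A0 kn.
rewrite /char_poly /determinant coef_sum (bigID (fun s : 'S_n => #|[set i | s i != i]| == k)) /=.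
rewrite [X in _ + X]big1 ?addr0; last first.
  move=> s /negbTE sk.
  rewrite coef_char_term // coefZ coefXn.
  have : (#|[set i | s i != i]| <= n)%N by rewrite -[X in (_ <= X)%N]card_ord max_card.
  move=> hle; case: eqP; last by rewrite mulr0.
  by move=> h; move: sk; rewrite -(eqn_sub2lE hle kn) h eqxx.
apply: eq_bigr => s /eqP sk.
rewrite coef_char_term // coefZ coefXn sk eqxx mulr1 -mulrA; congr (_ * _).
rewrite -sk prodrN.
by rewrite cardsE.
Qed.

Lemma set2_eq (T : finType) (x y a b : T) :
  ([set x; y] == [set a; b]) = ((x == a) && (y == b)) || ((x == b) && (y == a)).
Proof.
apply/eqP/idP.
  move=> E; have h : [set x; y] =i [set a; b] by rewrite E.
  have hx := h x; have hy := h y; have ha := h a; have hb := h b.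
  rewrite !in_set2 !eqxx /= ?orbT in hx hy ha hb.
  move: hx hy => /esym hx /esym hy; clear E h.
  case/orP: hx => /eqP hx; case/orP: hy => /eqP hy; subst x y; rewrite ?eqxx ?orbT ?andbT //=.
    by rewrite orbb in hb; rewrite eq_sym hb.
  by rewrite orbb in ha; rewrite eq_sym ha.
by case/orP=> /andP[/eqP-> /eqP->] //; rewrite setUC.
Qed.

Notation mv s := [set i | s i != i].

Section PermPart.
Variable n : nat.
Implicit Type s : 'S_n.

Definition Fs s : {set {set 'I_n}} := [set [set i; s i] | i in mv s].

Lemma fadj_Fs s x y : fadj (Fs s) x y = (x != y) && ((y == s x) || (x == s y)).
Proof.
rewrite /fadj; apply/imsetP/idP.
  move=> [i]; rewrite inE => hi /eqP; rewrite set2_eq.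
  case/orP=> /andP[/eqP-> /eqP->]; first by rewrite eq_sym hi eqxx.
  by rewrite hi eqxx orbT.
case/andP=> xy /orP[/eqP e | /eqP e]; subst.
  by exists x; rewrite // inE eq_sym.
exists y; last by rewrite setUC.
by rewrite inE.
Qed.

Lemma Vset_Fs s : Vset (Fs s) = mv s.
Proof.
apply/setP => v; rewrite !inE; apply/existsP/idP.
  move=> [u]; rewrite fadj_Fs => /andP[uv /orP[/eqP e|/eqP e]].
    by rewrite e (inj_eq perm_inj) eq_sym -e.
  by rewrite -e.
by move=> h; exists (s v); rewrite fadj_Fs h eqxx orbT.
Qed.

Lemma fadjF_connect s : connect (fadj (Fs s)) =2 fconnect s.
Proof.
move=> x y; apply/idP/idP.
  apply: connect_sub => u v; rewrite fadj_Fs => /andP[_ /orP[/eqP->|/eqP->]].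
    exact: fconnect1.
  by rewrite (fconnect_sym (@perm_inj _ s)); apply: fconnect1.
apply: connect_sub => u v /eqP <-.
case: (eqVneq u (s u)) => [<-|ne]; first exact: connect0.
by apply: connect1; rewrite fadj_Fs ne eqxx.
Qed.

Lemma porbitE s x : porbit s x = [set y | fconnect s x y].
Proof.
apply/setP => y; rewrite inE; apply/porbitP/idP => [[i ->]| h].
  by rewrite permX; apply: fconnect_iter.
by exists (findex s x y); rewrite permX iter_findex.
Qed.

Lemma comps_Fs s : comps (Fs s) = [set [set y | fconnect s x y] | x in mv s].
Proof.
rewrite /comps Vset_Fs; apply: eq_imset => x; apply/setP=> y.
by rewrite !inE fadjF_connect.
Qed.

Lemma fix_fconnect s y z : s y = y -> fconnect s y z -> z = y.
Proof.
move=> sy; rewrite -[fconnect s y z](@in_set _ (fconnect s y)) -porbitE.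
by case/porbitP => i ->; rewrite permX iter_fix.
Qed.

Lemma moved_fconnect s x y : s x != x -> fconnect s x y -> s y != y.
Proof.
move=> sx cxy; apply/negP => /eqP sy.
rewrite (fconnect_sym (@perm_inj _ s)) in cxy.
by move: sx; rewrite (fix_fconnect sy cxy) sy eqxx.
Qed.

Lemma card_porbits s : #|porbits s| = (n - #|mv s| + #|comps (Fs s)|)%N.
Proof.
have -> : porbits s = (porbit s @: mv s) :|: (porbit s @: ~: mv s).
  rewrite -imsetU setUCr; apply/setP => O; apply/imsetP/imsetP => -[x _ ->]; by exists x.
rewrite cardsU.
have -> : (porbit s @: mv s) :&: (porbit s @: ~: mv s) = set0.
  apply/setP => O; rewrite !inE; apply/negP => /andP[/imsetP[x xm ->] /imsetP[y ym E]].
  move: xm ym; rewrite !inE negbK => xm /eqP ym.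
  have : y \in porbit s x by rewrite E porbit_id.
  rewrite porbitE inE (fconnect_sym (@perm_inj _ s)) => /(fix_fconnect ym) yx.
  by move: xm; rewrite yx ym eqxx.
rewrite cards0 subn0 addnC; congr (_ + _)%N.
  rewrite card_in_imset; last first.
    move=> x y; rewrite !inE !negbK => /eqP sx /eqP sy E.
    have : y \in porbit s x by rewrite E porbit_id.
    by rewrite porbitE inE => /(fix_fconnect sx).
  by have := cardsC (mv s); rewrite card_ord; lia.
rewrite comps_Fs; apply: eq_card => O.
by apply/imsetP/imsetP => -[x xm ->]; exists x; rewrite ?porbitE.
Qed.

Lemma sign_Fs (R : ringType) s :
  (-1) ^+ s = (-1) ^+ (#|mv s| + #|comps (Fs s)|) :> R.
Proof.
rewrite -signr_odd -[RHS]signr_odd; congr ((-1) ^+ (nat_of_bool _)).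
have hm : (#|mv s| <= n)%N by rewrite -[X in (_ <= X)%N]card_ord max_card.
rewrite /odd_perm card_ord card_porbits !oddD oddB //.
by case: (odd n); case: (odd #|mv s|); case: (odd #|comps _|).
Qed.

Lemma elementary_Fs s : elementary (Fs s).
Proof.
apply/forallP => C; apply/implyP; rewrite comps_Fs => /imsetP[x xm ->].
rewrite inE in xm.
set C' := [set y | fconnect s x y].
have hC : #|C'| = fingraph.order s x by rewrite /fingraph.order; apply: eq_card => y; rewrite inE.
case: eqP => //= ne2.
apply/existsP.
have hs : size (fingraph.orbit s x) == #|C'| by rewrite fingraph.size_orbit hC.
exists (Tuple hs).
rewrite /cyc_seq /=.
have cyc := fingraph.cycle_orbit (@perm_inj _ s) x.
apply/and4P; split.
- exact: fingraph.orbit_uniq.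
- rewrite fingraph.size_orbit -hC.
  have h2 : (2 <= #|C'|)%N.
    have := subset_leq_card (_ : [set x; s x] \subset C').
    rewrite cards2 eq_sym xm; apply; apply/subsetP => y; rewrite !inE.
    by case/orP=> /eqP->; [apply: connect0 | apply: fconnect1].
  by rewrite ltn_neqAle h2 andbT eq_sym; apply/eqP.
- by apply/eqP; apply/setP => y; rewrite !inE fingraph.fconnect_orbit.
apply/forallP => y; apply/implyP => yC; apply/forallP => z; apply/implyP => zC.
rewrite inE in yC; rewrite inE in zC.
rewrite !(nextE cyc) -?fingraph.fconnect_orbit // fadj_Fs.
have sy := moved_fconnect xm yC.
case: (eqVneq y z) => [<-|//].
by rewrite [y == s y]eq_sym (negbTE sy).
Qed.

End PermPart.

Section Key.
Variable T : finType.

Lemma next_next_neq (s : seq T) x : uniq s -> (2 < size s)%N -> x \in s ->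
  next s (next s x) != x.
Proof.
move=> us ss xs; case/rot_to: xs => i q e.
have uq : uniq (x :: q) by rewrite -e rot_uniq.
have sq : (2 < size (x :: q))%N by rewrite -e size_rot.
case: q e uq sq => [|a [|b r]] // e uq sq.
move: uq; rewrite /= !inE !negb_or => /andP[/and3P[xa xb xr] /andP[/andP[ab ar] _]].
have nx : next [:: x, a, b & r] x = a by rewrite next_nth mem_head /= eqxx.
have na : next [:: x, a, b & r] a = b.
  by rewrite next_nth !inE eqxx orbT /= (negbTE xa) eqxx.
by rewrite -!(next_rot i us) e nx na eq_sym.
Qed.

Lemma prev_eq_next (s : seq T) x y : uniq s -> (y == prev s x) = (next s y == x).
Proof.
move=> us; apply/eqP/eqP => [->|<-]; [by rewrite next_prev | by rewrite prev_next].
Qed.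

Lemma cyc_fun_next (s : seq T) (t : T -> T) x0 :
  uniq s -> (2 < size s)%N -> injective t -> {in s, forall x, t x \in s} ->
  {in s &, forall x y, ((y == t x) || (x == t y)) = ((y == next s x) || (x == next s y))} ->
  x0 \in s -> t x0 = next s x0 -> {in s, forall x, t x = next s x}.
Proof.
move=> us ss ti ts H x0s tx0.
have step : forall y, y \in s -> t y = next s y -> t (next s y) = next s (next s y).
  move=> y ys ty; set z := next s y.
  have zs : z \in s by rewrite mem_next.
  have := H z (t z) zs (ts z zs); rewrite eqxx /= => /esym.
  case/orP => [/eqP //| /eqP hz].
  have tzy : t z = y by rewrite -[t z](prev_next us) -hz /z prev_next.
  have nzs : next s z \in s by rewrite mem_next.
  have := H z (next s z) zs nzs.
  rewrite eqxx orTb => hh.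
  have nn := next_next_neq us ss ys.
  move: hh; rewrite tzy /z (negbTE nn) /= => /eqP h; have : t (next s z) = t y by rewrite -h ty.
  by move/ti => e; rewrite e eqxx in nn.
move=> x xs.
have : fconnect (next s) x0 x by rewrite (fconnect_cycle (cycle_next us) x0s).
move/iter_findex <-; elim: (findex _ x0 x) => [|i IH] //=.
rewrite step //; elim: i {IH} => [|i IH] //=; by rewrite mem_next.
Qed.

Lemma cyc_fun (s : seq T) (t : T -> T) :
  uniq s -> (2 < size s)%N -> injective t -> {in s, forall x, t x \in s} ->
  {in s &, forall x y, ((y == t x) || (x == t y)) = ((y == next s x) || (x == next s y))} ->
  {in s, forall x, t x = next s x} \/ {in s, forall x, t x = prev s x}.
Proof.
move=> us ss ti ts H.
case: s us ss ts H => [|x0 s'] // us ss ts H.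
set s := x0 :: s' in us ss ts H *.
have x0s : x0 \in s by rewrite mem_head.
have := H x0 (t x0) x0s (ts _ x0s); rewrite eqxx /= => /esym.
case/orP => /eqP h.
  by left; apply: (cyc_fun_next us ss ti ts H x0s h).
right.
have urs : uniq (rev s) by rewrite rev_uniq.
have srs : (2 < size (rev s))%N by rewrite size_rev.
have trs : {in rev s, forall x, t x \in rev s} by move=> x; rewrite !mem_rev; apply: ts.
have Hr : {in rev s &, forall x y, ((y == t x) || (x == t y)) =
            ((y == next (rev s) x) || (x == next (rev s) y))}.
  move=> x y; rewrite !mem_rev => xs ys; rewrite H // !next_rev //.
  by rewrite !prev_eq_next // orbC (eq_sym (next s y)) (eq_sym (next s x)).
have h' : t x0 = next (rev s) x0.
  rewrite next_rev //; apply: (can_inj (prev_next us)); rewrite next_prev //; symmetry; exact: h.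
have x0r : x0 \in rev s by rewrite mem_rev.
move=> x xs; have := @cyc_fun_next (rev s) t x0 urs srs ti trs Hr x0r h' x.
by rewrite mem_rev next_rev //; apply.
Qed.

End Key.

Section FF.
Variable n : nat.
Variable adj : rel 'I_n.
Hypothesis adj_sym : forall u v, adj u v = adj v u.
Hypothesis adj_irr : forall u, ~~ adj u u.
Variable F : {set {set 'I_n}}.
Hypothesis FE : F \subset edgeset adj.
Implicit Types (C : {set 'I_n}) (f : {ffun 'I_n -> 'I_n}) (s : seq 'I_n).

Lemma fadj_sym x y : fadj F x y = fadj F y x.
Proof. by rewrite /fadj setUC. Qed.

Lemma fadj_adj x y : fadj F x y -> adj x y.
Proof.
move=> h; have := subsetP FE _ h; rewrite inE => /existsP[u /existsP[v /andP[uv /eqP e]]].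
move/eqP: e; rewrite set2_eq => /orP[/andP[/eqP-> /eqP->]|/andP[/eqP-> /eqP->]] //.
by rewrite adj_sym.
Qed.

Lemma fadj_irr x : ~~ fadj F x x.
Proof. by apply/negP => /fadj_adj; rewrite (negbTE (adj_irr x)). Qed.

Definition compof x := [set w | connect (fadj F) x w].

Lemma csym : connect_sym (fadj F).
Proof. by apply: sym_connect_sym => x y; apply: fadj_sym. Qed.

Lemma compof_eq x y : y \in compof x -> compof y = compof x.
Proof.
rewrite inE => cxy; apply/setP => w; rewrite !inE.
by rewrite (same_connect csym cxy).
Qed.

Lemma compof_id x : x \in compof x.
Proof. by rewrite inE connect0. Qed.

Lemma Vset_closed : closed (fadj F) (Vset F).
Proof.
move=> x y h; rewrite !inE.
have -> : [exists u, fadj F u x] by apply/existsP; exists y; rewrite fadj_sym.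
by apply/esym/existsP; exists x.
Qed.

Lemma compof_Vset x y : x \in Vset F -> y \in compof x -> y \in Vset F.
Proof. by move=> xV; rewrite inE => /(closed_connect Vset_closed) <-. Qed.

Lemma comps_compof C x : C \in comps F -> x \in C -> compof x = C.
Proof. by case/imsetP => v vV -> xC; apply: compof_eq. Qed.

Lemma compof_comps x : x \in Vset F -> compof x \in comps F.
Proof. by move=> xV; apply/imsetP; exists x. Qed.

Lemma comps_sub C x : C \in comps F -> x \in C -> x \in Vset F.
Proof. by case/imsetP => v vV -> xC; apply: compof_Vset xC. Qed.

Lemma prod_comps (R : comRingType) (E : 'I_n -> R) :
  \prod_(i in Vset F) E i = \prod_(C in comps F) \prod_(i in C) E i.
Proof.
rewrite (partition_big compof (fun C => C \in comps F)) => [|i iV]; last exact: compof_comps.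
apply: eq_bigr => C CC; apply: eq_bigl => i.
apply/andP/idP => [[iV /eqP <-]|iC]; first exact: compof_id.
by split; [exact: comps_sub iC | apply/eqP; exact: comps_compof].
Qed.

Definition fibC (C : {set 'I_n}) (f : {ffun 'I_n -> 'I_n}) : bool :=
  [&& injectiveb f, [forall x, (x \notin C) ==> (f x == x)] &
      [forall x in C, forall y in C, fadj F x y == ((y == f x) || (x == f y))]].

Lemma fibCP C f : reflect [/\ injective f, forall x, x \notin C -> f x = x &
     forall x y, x \in C -> y \in C -> fadj F x y = ((y == f x) || (x == f y))]
   (fibC C f).
Proof.
apply: (iffP and3P) => [[/injectiveP fi /forallP fo /forallP fc]|[fi fo fc]]; split => //.
- by move=> x xC; apply/eqP/(implyP (fo x)).
- move=> x y xC yC; have /forallP/(_ y) := implyP (fc x) xC.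
  by move=> /implyP/(_ yC)/eqP.
- exact/injectiveP.
- by apply/forallP => x; apply/implyP => /fo ->.
apply/forallP => x; apply/implyP => xC; apply/forallP => y; apply/implyP => yC.
by rewrite fc.
Qed.

Lemma fibC_in C f x : fibC C f -> x \in C -> (f x \in C) && (f x != x).
Proof.
case/fibCP => fi fo fc xC.
have ne : f x != x.
  have := fc x x xC xC; rewrite (negbTE (fadj_irr x)) orbb => /esym/negbT.
  by rewrite eq_sym.
rewrite ne andbT; apply/negPn/negP => h.
by have := fo _ h => /fi e; rewrite e eqxx in ne.
Qed.

Definition Tf u v : {ffun 'I_n -> 'I_n} :=
  [ffun x => if x == u then v else if x == v then u else x].

Lemma fibC_edge u v : u != v -> fadj F u v -> fibC [set u; v] =1 pred1 (Tf u v).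
Proof.
move=> uv fuv f; apply/idP/eqP.
  move=> h.
  have /andP[hu nu] := fibC_in h (set21 u v).
  have /andP[hv nv] := fibC_in h (set22 u v).
  case/fibCP: h => fi fo fc.
  rewrite !inE (negbTE nu) /= in hu; rewrite !inE (negbTE nv) orbF in hv.
  apply/ffunP => x; rewrite ffunE.
  case: eqP => [->|xu]; first exact/eqP.
  case: eqP => [->|xv]; first exact/eqP.
  by apply: fo; rewrite !inE; apply/norP; split; apply/eqP.
move->; apply/fibCP; split.
- apply: (can_inj (g := Tf u v)) => x; rewrite !ffunE.
  have [->|xu] := eqVneq x u; first by rewrite eq_sym (negbTE uv) eqxx.
  have [->|xv] := eqVneq x v; first by rewrite eqxx.
  by rewrite (negbTE xu) (negbTE xv).
- by move=> x; rewrite !inE ffunE negb_or => /andP[/negbTE-> /negbTE->].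
move=> x y; rewrite !inE => /orP[/eqP->|/eqP->] /orP[/eqP->|/eqP->];
  rewrite !ffunE ?eqxx ?(negbTE uv) ?(eq_sym v u) ?(negbTE uv) ?(negbTE (fadj_irr _)) //=.
- by rewrite fadj_sym fuv orbT.
by rewrite eq_sym (negbTE uv).
Qed.

Definition Nf (s : seq 'I_n) : {ffun 'I_n -> 'I_n} := [ffun x => next s x].
Definition Pf (s : seq 'I_n) : {ffun 'I_n -> 'I_n} := [ffun x => prev s x].

Lemma cyc_seqP C s : cyc_seq F C s ->
  [/\ uniq s, (2 < size s)%N, C =i s &
     forall x y, x \in C -> y \in C -> fadj F x y = ((y == next s x) || (x == next s y))].
Proof.
case/and4P => us ss /eqP sC /forallP fc; split => //.
  by move=> x; rewrite -sC inE.
move=> x y xC yC; have /forallP/(_ y) := implyP (fc x) xC.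
by move=> /implyP/(_ yC)/eqP.
Qed.

Lemma not_in_next (s : seq 'I_n) x : x \notin s -> next s x = x.
Proof. by rewrite next_nth => /negbTE->. Qed.

Lemma not_in_prev (s : seq 'I_n) x : x \notin s -> prev s x = x.
Proof. by rewrite prev_nth => /negbTE->. Qed.

Lemma fibC_Nf C s : cyc_seq F C s -> fibC C (Nf s).
Proof.
case/cyc_seqP => us ss sC fc; apply/fibCP; split.
- by apply: (can_inj (g := prev s)) => x; rewrite ffunE prev_next.
- by move=> x; rewrite sC ffunE => /not_in_next.
by move=> x y xC yC; rewrite !ffunE fc.
Qed.

Lemma fibC_Pf C s : cyc_seq F C s -> fibC C (Pf s).
Proof.
case/cyc_seqP => us ss sC fc; apply/fibCP; split.
- by apply: (can_inj (g := next s)) => x; rewrite ffunE next_prev.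
- by move=> x; rewrite sC ffunE => /not_in_prev.
move=> x y xC yC; rewrite !ffunE fc // !prev_eq_next //.
by rewrite orbC (eq_sym (next s y)) (eq_sym (next s x)).
Qed.

Lemma fibC_cyc C s f : cyc_seq F C s -> fibC C f -> f = Nf s \/ f = Pf s.
Proof.
move=> cs /[dup] fC /fibCP[fi fo fc]; case/cyc_seqP: cs => us ss sC fcs.
have ts : {in s, forall x, f x \in s}.
  by move=> x; rewrite -!sC => xC; case/andP: (fibC_in fC xC).
have H : {in s &, forall x y, ((y == f x) || (x == f y)) =
                               ((y == next s x) || (x == next s y))}.
  by move=> x y; rewrite -!sC => xC yC; rewrite -fc // fcs.
case: (cyc_fun us ss fi ts H) => h; [left|right]; apply/ffunP => x; rewrite ffunE.
  case: (boolP (x \in s)) => xs; first exact: h.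
  by rewrite not_in_next // fo // sC.
case: (boolP (x \in s)) => xs; first exact: h.
by rewrite not_in_prev // fo // sC.
Qed.

Lemma Nf_Pf C s : cyc_seq F C s -> Nf s != Pf s.
Proof.
case/cyc_seqP => us ss sC fcs.
case: s us ss sC fcs => [|x s'] // us ss sC fcs.
apply/eqP => /ffunP/(_ x); rewrite !ffunE => e.
have := next_next_neq us ss (mem_head x s').
by rewrite [X in next _ X]e next_prev // eqxx.
Qed.

Lemma sum_fib_cyc (R : nmodType) C s (G : {ffun 'I_n -> 'I_n} -> R) :
  cyc_seq F C s -> \sum_(f | fibC C f) G f = G (Nf s) + G (Pf s).
Proof.
move=> cs; rewrite (bigD1 (Nf s)) ?fibC_Nf //=; congr (_ + _).
apply: big_pred1 => f /=; apply/andP/eqP => [[h ne]| ->].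
  by case: (fibC_cyc cs h) => // e; rewrite e eqxx in ne.
by split; [exact: fibC_Pf | rewrite eq_sym; exact: Nf_Pf cs].
Qed.


(* gluing families of component permutations *)
Definition famT := {ffun {set 'I_n} -> {ffun 'I_n -> 'I_n}}.
Implicit Type g : famT.
Definition idf : {ffun 'I_n -> 'I_n} := [ffun x => x].
Definition Phi (p : 'S_n) : famT :=
  [ffun C => if C \in comps F then [ffun x => if x \in C then p x else x] else idf].
Definition gluef (g : famT) (x : 'I_n) : 'I_n :=
  if x \in Vset F then g (compof x) x else x.
Definition mkperm (h : 'I_n -> 'I_n) : 'S_n := insubd (1%g : 'S_n) [ffun x => h x].

Lemma mkpermE (g : 'I_n -> 'I_n) : injective g -> mkperm g =1 g.
Proof.
move=> gi x; have h : injectiveb [ffun x => g x].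
  by apply/injectiveP => a b; rewrite !ffunE; apply: gi.
by rewrite -pvalE /mkperm insubdK // ffunE.
Qed.

Definition glue (g : famT) : 'S_n := mkperm (gluef g).

Definition pfam (g : famT) : bool :=
  [forall C, if C \in comps F then fibC C (g C) else g C == idf].

Lemma pfamP g : reflect ((forall C, C \in comps F -> fibC C (g C)) /\
                         (forall C, C \notin comps F -> g C = idf)) (pfam g).
Proof.
apply: (iffP forallP) => [h|[h1 h2] C].
  split=> C hC; have := h C; rewrite ?hC //.
  by rewrite (negbTE hC) => /eqP.
by case: ifP => hC; [apply: h1 | apply/eqP/h2; rewrite hC].
Qed.

Lemma gluef_in g x : pfam g -> x \in Vset F -> gluef g x \in compof x.
Proof.
case/pfamP => h1 _ xV; rewrite /gluef xV.
by have /andP[] := fibC_in (h1 _ (compof_comps xV)) (compof_id x).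
Qed.

Lemma glue_inj g : pfam g -> injective (gluef g).
Proof.
move=> pg x y.
have gV z : z \in Vset F -> gluef g z \in Vset F.
  by move=> zV; apply: compof_Vset zV (gluef_in pg zV).
case: (boolP (x \in Vset F)) => xV; case: (boolP (y \in Vset F)) => yV.
- move=> e; have cx := gluef_in pg xV; have cy := gluef_in pg yV.
  have exy : compof x = compof y.
    by rewrite -(compof_eq cx) -(compof_eq cy) e.
  case/pfamP: pg => h1 _; case/fibCP: (h1 _ (compof_comps xV)) => fi _ _.
  by apply: fi; move: e; rewrite /gluef xV yV exy.
- by move=> e; move: (gV _ xV); rewrite e /gluef (negbTE yV) (negbTE yV).
- by move=> e; move: (gV _ yV); rewrite -e /gluef (negbTE xV) (negbTE xV).
by rewrite /gluef (negbTE xV) (negbTE yV).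
Qed.

Lemma Fs_glue g : pfam g -> Fs (glue g) = F.
Proof.
move=> pg; have gi := glue_inj pg.
have [h1 h2] := pfamP _ pg.
apply/setP => e; apply/imsetP/idP.
  move=> [i]; rewrite inE /glue mkpermE // => hi ->.
  have iV : i \in Vset F by apply: contraR hi; rewrite /gluef => /negbTE->.
  have CC := compof_comps iV.
  case/fibCP: (h1 _ CC) => _ _ fc.
  have := gluef_in pg iV; rewrite /gluef iV => gC.
  have := fc i (g (compof i) i) (compof_id i) gC; rewrite eqxx /= => fi.
  exact: fi.
move=> eF; have := subsetP FE _ eF; rewrite inE => /existsP[u /existsP[v /andP[uv /eqP ee]]].
subst e.
have fuv : fadj F u v by [].
have uV : u \in Vset F by rewrite inE; apply/existsP; exists v; rewrite fadj_sym.
have vC : v \in compof u by rewrite inE; apply: connect1.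
have CC := compof_comps uV.
case/fibCP: (h1 _ CC) => _ _ fc.
have := fc u v (compof_id u) vC; rewrite fuv => /esym/orP[/eqP hv|/eqP hu].
  exists u; last by rewrite /glue mkpermE // /gluef uV -hv.
  rewrite inE /glue mkpermE // /gluef uV -hv eq_sym; apply/negP => /eqP e.
  by move: uv; rewrite e (negbTE (adj_irr _)).
have vV : v \in Vset F by apply: compof_Vset vC.
exists v; last by rewrite /glue mkpermE // /gluef vV (compof_eq vC) -hu setUC.
rewrite inE /glue mkpermE // /gluef vV (compof_eq vC) -hu; apply/negP => /eqP e.
by move: uv; rewrite e (negbTE (adj_irr _)).
Qed.

Lemma Phi_glue g : pfam g -> Phi (glue g) = g.
Proof.
move=> pg; have gi := glue_inj pg; have [h1 h2] := pfamP _ pg.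
apply/ffunP => C; rewrite ffunE; case: ifPn => CC; last by rewrite h2.
apply/ffunP => x; rewrite ffunE; case: ifPn => xC.
  by rewrite /glue mkpermE // /gluef (comps_sub CC xC) (comps_compof CC xC).
by case/fibCP: (h1 _ CC) => _ fo _; rewrite fo.
Qed.

Section FromPerm.
Variable p : 'S_n.
Hypothesis pF : Fs p = F.

Lemma VsetE : Vset F = mv p.
Proof. by rewrite -pF Vset_Fs. Qed.

Lemma conn_p x : connect (fadj F) x (p x).
Proof.
case: (eqVneq (p x) x) => [->|ne]; first exact: connect0.
by apply: connect1; rewrite -pF fadj_Fs eq_sym ne eqxx.
Qed.

Lemma pC C x : C \in comps F -> (p x \in C) = (x \in C).
Proof.
case/imsetP => v _ ->; rewrite !inE.
by rewrite (same_connect_r csym (conn_p x)).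
Qed.

Lemma gluef_Phi : gluef (Phi p) =1 p.
Proof.
move=> x; rewrite /gluef; case: ifPn => xV.
  by rewrite ffunE compof_comps // ffunE compof_id.
by apply/esym/eqP; move: xV; rewrite VsetE inE negbK.
Qed.

Lemma glue_Phi : glue (Phi p) = p.
Proof.
have gi : injective (gluef (Phi p)) by apply: eq_inj (@perm_inj _ p) _ => x; rewrite gluef_Phi.
by apply/permP => x; rewrite /glue mkpermE // gluef_Phi.
Qed.

Lemma Phi_pfam : pfam (Phi p).
Proof.
apply/pfamP; split => C CC; rewrite ffunE ?CC; last by rewrite (negbTE CC).
apply/fibCP; split.
- move=> a b; rewrite !ffunE.
  case: (boolP (a \in C)) => aC; case: (boolP (b \in C)) => bC.
  + exact: perm_inj.
  + by move=> e; move: bC; rewrite -e pC // aC.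
  + by move=> e; move: aC; rewrite e pC // bC.
  + by [].
- by move=> x; rewrite ffunE => /negbTE->.
move=> x y xC yC; rewrite !ffunE xC yC -pF fadj_Fs.
have px : p x != x by move: (comps_sub CC xC); rewrite VsetE inE.
case: (eqVneq x y) => [<-|//]; by rewrite /= eq_sym (negbTE px).
Qed.

End FromPerm.

Lemma fiber_sum (R : nmodType) (G : famT -> R) :
  \sum_(p : 'S_n | Fs p == F) G (Phi p) = \sum_(g | pfam g) G g.
Proof.
rewrite [RHS](reindex_onto Phi glue) => [|g hg]; last exact: Phi_glue.
apply: eq_bigl => p; apply/idP/andP => [/eqP e | [h /eqP e]].
  by split; [exact: Phi_pfam | apply/eqP; exact: glue_Phi].
by rewrite -e Fs_glue.
Qed.

End FF.
Section Omega.

Lemma om_conj : omega^* = 1 - omega.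
Proof.
have r3 : (sqrtC 3 : algC)^* = sqrtC 3.
  by apply: conj_Creal; apply: ger0_real; rewrite sqrtC_ge0 ler0n.
rewrite /omega fmorph_div rmorphD rmorphM /= r3 conjCi rmorph1 conjC_nat.
have h2 : (2 : algC) != 0 by rewrite pnatr_eq0.
by field.
Qed.

Lemma om_sum : omega + omega^* = 1.
Proof. by rewrite om_conj addrC subrK. Qed.

Lemma om_prod : omega * omega^* = 1.
Proof.
rewrite om_conj /omega.
have h2 : (2 : algC) != 0 by rewrite pnatr_eq0.
have i2 : 'i * 'i = -1 :> algC by exact: mulCii.
have r2 : sqrtC 3 * sqrtC 3 = 3 :> algC by rewrite -expr2 sqrtCK.
have -> : (1 + 'i * sqrtC 3) / 2 * (1 - (1 + 'i * sqrtC 3) / 2) =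
          (1 - ('i * 'i) * (sqrtC 3 * sqrtC 3)) / 4 :> algC.
  by field; rewrite ?pnatr_eq0.
by rewrite i2 r2; field; rewrite ?pnatr_eq0.
Qed.

Local Notation a := omega.
Local Notation b := (omega^*).

Lemma two_neq0 : (2 : algC) != 0. Proof. by rewrite pnatr_eq0. Qed.
Lemma three_neq0 : (3 : algC) != 0. Proof. by rewrite pnatr_eq0. Qed.

Lemma om_b_prod : b * a = 1. Proof. by rewrite mulrC om_prod. Qed.

Lemma om_aa : a * a = - b.
Proof.
transitivity (a * (a + b) - a * b); first by ring.
by rewrite om_sum om_prod mulr1 -om_sum; ring.
Qed.

Lemma om_bb : b * b = - a.
Proof.
transitivity (b * (a + b) - a * b); first by ring.
by rewrite om_sum om_prod mulr1 -om_sum; ring.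
Qed.

Lemma om_a6 : a ^+ 6 = 1.
Proof.
have -> : a ^+ 6 = (a * a) * (a * a) * (a * a) by rewrite !exprS expr0; ring.
by rewrite om_aa mulrNN om_bb mulrNN om_prod.
Qed.

Lemma om_b6 : b ^+ 6 = 1.
Proof. by rewrite -rmorphXn om_a6 rmorph1. Qed.


Lemma om_a_neq1 : a != 1.
Proof.
apply/eqP => h; move: om_sum; rewrite h conjC1 => /(congr1 (fun x => x - 1)).
by rewrite addrK subrr => /eqP; rewrite oner_eq0.
Qed.

Lemma om_b_neq1 : b != 1.
Proof. by apply/eqP => h; move: om_a_neq1; rewrite -[omega]conjCK h conjC1 eqxx. Qed.

Lemma om_a_neqN1 : a != -1.
Proof.
apply/eqP => h; move: om_sum; rewrite h rmorphN1 => /eqP; rewrite -subr_eq0 => /eqP h3.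
move: three_neq0; have -> : (3 : algC) = - (-1 + -1 - 1) by ring.
by rewrite h3 oppr0 eqxx.
Qed.

Lemma om_b_neqN1 : b != -1.
Proof. by apply/eqP => h; move: om_a_neqN1; rewrite -[omega]conjCK h rmorphN1 eqxx. Qed.

Lemma om_a_neq0 : a != 0.
Proof. by apply/eqP => h; move: om_prod; rewrite h mul0r => /eqP; rewrite eq_sym oner_eq0. Qed.

Lemma om_b_neq0 : b != 0.
Proof. by apply/eqP => h; move: om_prod; rewrite h mulr0 => /eqP; rewrite eq_sym oner_eq0. Qed.

Lemma om_a_neqNb : a != - b.
Proof. by apply/eqP => h; move: om_sum; rewrite {1}h addNr => /eqP; rewrite eq_sym oner_eq0. Qed.

Lemma one_neqN1 : (1 : algC) != -1.
Proof. by apply/eqP => h; move: two_neq0; rewrite -[2]/(1 + 1) {1}h addNr eqxx. Qed.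

Lemma om_a3 : a ^+ 3 = -1.
Proof. by rewrite !exprS expr0 mulr1 om_aa mulrN om_prod. Qed.

Lemma om_b3 : b ^+ 3 = -1.
Proof. by rewrite !exprS expr0 mulr1 om_bb mulrN om_b_prod. Qed.

Lemma om_pow (j : nat) :
  (a ^+ j = 1 /\ b ^+ j = 1) \/ (a ^+ j = a /\ b ^+ j = b) \/
  (a ^+ j = - b /\ b ^+ j = - a) \/ (a ^+ j = -1 /\ b ^+ j = -1) \/
  (a ^+ j = - a /\ b ^+ j = - b) \/ (a ^+ j = b /\ b ^+ j = a).
Proof.
rewrite -(expr_mod j om_a6) -(expr_mod j om_b6).
have : (j %% 6 < 6)%N by rewrite ltn_pmod.
case: (j %% 6)%N => [|[|[|[|[|[|k]]]]]] // _.
- by left; rewrite !expr0.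
- by right; left; rewrite !expr1.
- by do 2 right; left; rewrite !expr2 om_aa om_bb.
- by do 3 right; left; rewrite om_a3 om_b3.
- by do 4 right; left; rewrite (exprS a 3) (exprS b 3) om_a3 om_b3 !mulrN1.
- do 5 right; rewrite -[5%N]/(2 + 3)%N !exprD !expr2 om_a3 om_b3 om_aa om_bb.
  by rewrite !mulrN1 !opprK.
Qed.

Definition cval (w : algC) : algC :=
  (if w == 1 then 2 else 1) * (if w == -1 then -2 else 1) *
  (if (w == - a) || (w == - b) then -1 else 1).

Lemma om_a_neq_b : a != b.
Proof.
apply/eqP => h; move: om_aa; rewrite -h => /eqP; rewrite -subr_eq0 opprK.
have -> : a * a + a = a * (a + 1) by ring.
rewrite mulf_eq0 (negbTE om_a_neq0) /= addr_eq0.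
by rewrite (negbTE om_a_neqN1).
Qed.

Lemma om_f1 : (a == 1) = false.
Proof. by apply/negbTE/om_a_neq1. Qed.

Lemma om_f2 : (b == 1) = false.
Proof. by apply/negbTE/om_b_neq1. Qed.

Lemma om_f3 : (a == -1) = false.
Proof. by apply/negbTE/om_a_neqN1. Qed.

Lemma om_f4 : (b == -1) = false.
Proof. by apply/negbTE/om_b_neqN1. Qed.

Lemma om_f5 : (1 == -1 :> algC) = false.
Proof. by apply/negbTE/one_neqN1. Qed.

Lemma om_f6 : (1 == -a) = false.
Proof. by rewrite eq_sym eqr_oppLR om_f3. Qed.

Lemma om_f7 : (1 == -b) = false.
Proof. by rewrite eq_sym eqr_oppLR om_f4. Qed.

Lemma om_f8 : (a == -a) = false.
Proof. by rewrite -addr_eq0 -mulr2n -mulr_natr mulf_eq0 (negbTE om_a_neq0) (negbTE two_neq0). Qed.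

Lemma om_f9 : (b == -b) = false.
Proof. by rewrite -addr_eq0 -mulr2n -mulr_natr mulf_eq0 (negbTE om_b_neq0) (negbTE two_neq0). Qed.

Lemma om_f10 : (a == -b) = false.
Proof. by apply/negbTE/om_a_neqNb. Qed.

Lemma om_f11 : (b == -a) = false.
Proof. by rewrite -eqr_oppLR eq_sym om_f10. Qed.

Lemma om_f12 : (-b == 1) = false.
Proof. by rewrite eq_sym om_f7. Qed.

Lemma om_f13 : (-a == 1) = false.
Proof. by rewrite eq_sym om_f6. Qed.

Lemma om_f14 : (-1 == 1 :> algC) = false.
Proof. by rewrite eq_sym om_f5. Qed.

Lemma om_f15 : (-b == -1) = false.
Proof. by rewrite eqr_opp om_f2. Qed.

Lemma om_f16 : (-a == -1) = false.
Proof. by rewrite eqr_opp om_f1. Qed.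

Lemma om_f17 : (-b == -a) = false.
Proof. by rewrite eqr_opp eq_sym (negbTE om_a_neq_b). Qed.

Lemma om_f18 : (-1 == -a) = false.
Proof. by rewrite eqr_opp eq_sym om_f1. Qed.

Lemma om_f19 : (-1 == -b) = false.
Proof. by rewrite eqr_opp eq_sym om_f2. Qed.

Lemma om_f20 : (-a == -b) = false.
Proof. by rewrite eqr_opp (negbTE om_a_neq_b). Qed.

Lemma om_f21 : (b == a) = false.
Proof. by rewrite eq_sym (negbTE om_a_neq_b). Qed.

Definition om_neqs := (om_f1, om_f2, om_f3, om_f4, om_f5, om_f6, om_f7, om_f8, om_f9, om_f10, om_f11, om_f12, om_f13, om_f14, om_f15, om_f16, om_f17, om_f18, om_f19, om_f20, om_f21).

Lemma om_preds (j : nat) :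
  [/\ (a ^+ j == 1) = (b ^+ j == 1), (a ^+ j == -1) = (b ^+ j == -1) &
      ((a ^+ j == - a) || (a ^+ j == - b)) = ((b ^+ j == - a) || (b ^+ j == - b))].
Proof.
case: (om_pow j) => [[-> ->]|[[-> ->]|[[-> ->]|[[-> ->]|[[-> ->]|[-> ->]]]]]];
  by rewrite ?eqxx ?om_neqs ?orbT.
Qed.

Lemma om_cval (j : nat) : a ^+ j + b ^+ j = cval (a ^+ j) /\ cval (a ^+ j) = cval (b ^+ j).
Proof.
rewrite /cval.
case: (om_pow j) => [[-> ->]|[[-> ->]|[[-> ->]|[[-> ->]|[[-> ->]|[-> ->]]]]]];
  rewrite ?eqxx ?om_neqs /= ?orbT; split => //; rewrite ?mulr1 ?mul1r.
- by ring.
- exact: om_sum.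
- by rewrite -opprD addrC om_sum.
- by ring.
- by rewrite -opprD om_sum.
- by rewrite addrC om_sum.
Qed.

End Omega.

Section Main.
Variable n : nat.
Variables adj arc : rel 'I_n.
Hypothesis hmg : mixed_graph adj arc.

Local Notation A := (Nmat adj arc).

Lemma adj_sym u v : adj u v = adj v u. Proof. by case: hmg. Qed.
Lemma adj_irr u : ~~ adj u u. Proof. by case: hmg. Qed.
Lemma arc_adj u v : arc u v -> adj u v. Proof. by case: hmg => _ _ h _; apply: h. Qed.
Lemma arc_anti u v : arc u v -> ~~ arc v u. Proof. by case: hmg => _ _ _ h; apply: h. Qed.

Lemma A_herm x y : A y x = (A x y)^*.
Proof.
rewrite !mxE.
case hxy: (arc x y).
  by rewrite (negbTE (arc_anti hxy)).
case hyx: (arc y x); first by rewrite conjCK.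
by rewrite adj_sym; case: (adj x y); rewrite ?conjC1 ?conjC0.
Qed.

Lemma A_diag x : A x x = 0.
Proof.
rewrite !mxE; have h : arc x x = false.
  by apply/negP => /arc_adj; rewrite (negbTE (adj_irr x)).
by rewrite h (negbTE (adj_irr x)).
Qed.

Lemma A_nadj x y : ~~ adj x y -> A x y = 0.
Proof.
move=> nxy; rewrite !mxE.
have h1 : arc x y = false by apply/negP => /arc_adj; rewrite (negbTE nxy).
have h2 : arc y x = false by apply/negP => /arc_adj; rewrite adj_sym (negbTE nxy).
by rewrite h1 h2 (negbTE nxy).
Qed.

Lemma b_a5 : omega^* = omega ^+ 5.
Proof. by rewrite -[5%N]/(2 + 3)%N exprD expr2 om_a3 om_aa mulrN1 opprK. Qed.

Lemma A_pow x y : adj x y -> exists j, A x y = omega ^+ j.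
Proof.
move=> hxy; rewrite !mxE.
case: (arc x y); first by exists 1%N; rewrite expr1.
case: (arc y x); first by exists 5%N; rewrite b_a5.
by rewrite hxy; exists 0%N; rewrite expr0.
Qed.

Lemma A_unit x y : adj x y -> A x y * A y x = 1.
Proof.
move=> /A_pow [j e]; rewrite (A_herm x y) e rmorphXn -exprMn om_prod expr1n //.
Qed.

Lemma prod_pow (I : finType) (P : pred I) (E : I -> algC) :
  (forall i, P i -> exists j, E i = omega ^+ j) ->
  exists j, \prod_(i | P i) E i = omega ^+ j.
Proof.
move=> h; apply: (big_ind (fun w => exists j, w = omega ^+ j)).
- by exists 0%N; rewrite expr0.
- by move=> _ _ [j1 ->] [j2 ->]; exists (j1 + j2)%N; rewrite exprD.
exact: h.
Qed.


Section PerF.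
Variable F : {set {set 'I_n}}.
Hypothesis FE : F \subset edgeset adj.
Hypothesis Fel : elementary F.

Definition PW (W : pred algC) (C : {set 'I_n}) :=
  [exists t : (#|C|).-tuple 'I_n, cyc_seq F C t && W (cyc_weight A t)].

Lemma comp_cases C : C \in comps F ->
  (exists u v, [/\ u != v, fadj F u v & C = [set u; v]]) \/
  (exists t : (#|C|).-tuple 'I_n, cyc_seq F C t).
Proof.
move=> CC; have := forallP Fel C; rewrite CC /= => /orP[h|/existsP h]; last by right.
left; case/cards2P: h => x [y [xy eC]]; exists x, y; split => //.
have xC : x \in C by rewrite eC set21.
have := comps_sub CC xC; rewrite inE => /existsP[w fwx].
have wC : w \in C.
  rewrite -(comps_compof CC xC) inE; apply: connect1.
  by rewrite (fadj_sym F).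
move: wC; rewrite eC !inE => /orP[/eqP e|/eqP e].
  by move: fwx; rewrite e (negbTE (fadj_irr adj_sym adj_irr FE x)).
by move: fwx; rewrite e fadj_sym.
Qed.

Lemma edge_val u v : u != v -> fadj F u v ->
  \sum_(f | fibC F [set u; v] f) \prod_(i in [set u; v]) A i (f i) = 1.
Proof.
move=> uv fuv.
rewrite (big_pred1 (Tf u v)); last exact: (fibC_edge adj_sym adj_irr FE uv fuv).
rewrite big_setU1 ?inE // big_set1 !ffunE eqxx eq_sym (negbTE uv) eqxx.
by apply: A_unit; apply: (fadj_adj adj_sym FE).
Qed.

Lemma PW_edge W u v : u != v -> PW W [set u; v] = false.
Proof.
move=> uv; apply/existsP => -[t /andP[/and4P[_ st _ _] _]].
by move: st; rewrite size_tuple cards2 uv.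
Qed.

Section Cyc.
Variable C : {set 'I_n}.
Variable t0 : seq 'I_n.
Hypothesis ct0 : cyc_seq F C t0.

Let w := \prod_(i in C) A i (next t0 i).

Lemma cyc_weightE t : cyc_seq F C t -> cyc_weight A t = \prod_(i in C) A i (Nf t i).
Proof.
case/cyc_seqP => ut _ Ct _; rewrite /cyc_weight big_uniq //.
by apply: eq_big => i; [rewrite Ct | rewrite ffunE].
Qed.

Lemma conj_w : \prod_(i in C) A i (prev t0 i) = w^*.
Proof.
case/cyc_seqP: ct0 => ut _ Ct _.
rewrite rmorph_prod (reindex_inj (can_inj (prev_next ut))) /=.
apply: eq_big => i; first by rewrite !Ct mem_next.
by rewrite prev_next // -A_herm.
Qed.

Lemma w_pow : exists j, w = omega ^+ j.
Proof.
apply: prod_pow => i iC; apply: A_pow.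
case/cyc_seqP: ct0 => ut _ Ct fc.
have niC : next t0 i \in C by rewrite Ct mem_next -Ct.
by apply: (fadj_adj adj_sym FE); rewrite fc // eqxx.
Qed.

Lemma PW_cyc (W : pred algC) j : w = omega ^+ j ->
  W (omega ^+ j) = W (omega^* ^+ j) -> PW W C = W w.
Proof.
move=> wj Wj; apply/existsP/idP.
  move=> [t /andP[ct Wt]]; rewrite cyc_weightE // in Wt.
  case: (fibC_cyc adj_sym adj_irr FE ct0 (fibC_Nf ct)) => e; rewrite e in Wt.
    by move: Wt; rewrite /w; under eq_bigr do rewrite ffunE.
  move: Wt; under eq_bigr do rewrite ffunE.
  by rewrite conj_w wj rmorphXn -Wj.
move=> Ww.
have hs : size t0 == #|C|.
  by case/cyc_seqP: ct0 => ut _ Ct _; rewrite -(card_uniqP ut); apply/eqP/eq_card => x; rewrite Ct.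
exists (Tuple hs); rewrite /= ct0 /= cyc_weightE //.
by rewrite /w in Ww; under eq_bigr do rewrite ffunE.
Qed.

Lemma cyc_val :
  \sum_(f | fibC F C f) \prod_(i in C) A i (f i) = w + w^*.
Proof.
rewrite (sum_fib_cyc adj_sym adj_irr FE _ ct0) -conj_w.
by congr (_ + _); apply: eq_bigr => i _; rewrite ffunE.
Qed.

End Cyc.

Definition P1 := PW (fun w => w == 1).
Definition Pm1 := PW (fun w => w == -1).
Definition Psn := PW (fun w => (w == - omega) || (w == - omega^*)).

Lemma comp_val C : C \in comps F ->
  \sum_(f | fibC F C f) \prod_(i in C) A i (f i) =
  (if P1 C then 2 else 1) * (if Pm1 C then -2 else 1) * (if Psn C then -1 else 1).
Proof.
move=> CC; case: (comp_cases CC) => [[u [v [uv fuv ->]]] | [t ct]].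
  by rewrite edge_val // /P1 /Pm1 /Psn !PW_edge // !mulr1.
have [j wj] := w_pow ct.
have [p1 p2 p3] := om_preds j.
rewrite (cyc_val ct) wj rmorphXn.
rewrite /P1 /Pm1 /Psn !(PW_cyc ct wj) //.
by rewrite wj; case: (om_cval j) => -> _.
Qed.


Lemma prod_if (P : pred {set 'I_n}) (c : algC) :
  \prod_(C in comps F) (if P C then c else 1) = c ^+ #|[set C in comps F | P C]|.
Proof.
rewrite -big_mkcondr /= -prodr_const; apply: eq_bigl => C; by rewrite inE.
Qed.

Lemma perF_sum k : #|Vset F| = k ->
  \sum_(s : 'S_n | Fs s == F) (-1) ^+ s * (-1) ^+ k * \prod_(i | s i != i) A i (s i)
  = (-1) ^+ #|comps F| * (2 ^+ #|[set C in comps F | P1 C]| *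
      (-2) ^+ #|[set C in comps F | Pm1 C]| * (-1) ^+ #|[set C in comps F | Psn C]|).
Proof.
move=> Vk.
transitivity (\sum_(s : 'S_n | Fs s == F) (-1) ^+ #|comps F| *
    \prod_(C in comps F) \prod_(i in C) A i (Phi F s C i)).
  apply: eq_bigr => s /eqP sF.
  have mvE : Vset F = mv s by rewrite -sF Vset_Fs.
  rewrite sign_Fs sF -mvE Vk.
  have -> : (-1) ^+ (k + #|comps F|) * (-1) ^+ k = (-1) ^+ #|comps F| :> algC.
    by rewrite addnC exprD -mulrA -expr2 sqrr_sign mulr1.
  congr (_ * _).
  rewrite (eq_bigl (fun i => i \in Vset F)); last by move=> i; rewrite mvE inE.
  rewrite prod_comps; apply: eq_bigr => C CC; apply: eq_bigr => i iC.
  by rewrite /Phi !ffunE CC !ffunE iC.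
rewrite -mulr_sumr.
rewrite (fiber_sum adj_sym adj_irr FE (fun g => \prod_(C in comps F) \prod_(i in C) A i (g C i))).
have -> : \sum_(g | pfam F g) \prod_(C in comps F) \prod_(i in C) A i (g C i) =
          \prod_(C in comps F) \sum_(f | fibC F C f) \prod_(i in C) A i (f i).
  rewrite (big_distr_big_dep (idf n)); apply: eq_bigl => g.
  apply/forallP/familyP => h C; have := h C; rewrite /=.
    have -> : (C \in in_mem^~ (mem (comps F))) = (C \in comps F) by [].
    by case: (C \in comps F) => hh; exact: hh.
  have -> : (C \in in_mem^~ (mem (comps F))) = (C \in comps F) by [].
  by case: (C \in comps F) => hh; exact: hh.
congr (_ * _).
rewrite (eq_bigr _ (fun C CC => comp_val CC)) !big_split /= !prod_if.
by [].
Qed.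

End PerF.

End Main.

Theorem theorem2p6 (n : nat) (adj arc : rel 'I_n) (k : nat) :
  mixed_graph adj arc -> (1 <= k <= n)%N ->
  (char_poly (Nmat adj arc))`_(n - k) =
  \sum_(F : {set {set 'I_n}} | [&& F \subset edgeset adj, elementary F
                                 & #|Vset F| == k])
     (-1) ^ (- (k%:Z) + rk F + (l_sn (Nmat adj arc) F)%:Z
             + (l_n (Nmat adj arc) F)%:Z)
     * 2 ^+ (l_p (Nmat adj arc) F + l_n (Nmat adj arc) F).
Proof.
move=> hmg /andP[k1 kn].
rewrite coef_char //; last exact: A_diag hmg.
rewrite (bigID (fun s : 'S_n => Fs s \subset edgeset adj)) /=.
rewrite [X in _ + X]big1 ?addr0; last first.
  move=> s /andP[_ /subsetPn [e /imsetP[i im ->] eE]].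
  have nadj : ~~ adj i (s i).
    apply: contra eE => h; rewrite inE; apply/existsP; exists i; apply/existsP; exists (s i).
    by rewrite h /=.
  rewrite inE in im.
  by rewrite (bigD1 i) //= (A_nadj hmg nadj) mul0r mulr0.
rewrite (partition_big (@Fs n) (fun F => [&& F \subset edgeset adj, elementary F & #|Vset F| == k])) /=; last first.
  by move=> s /andP[/eqP sk sE]; rewrite sE elementary_Fs Vset_Fs sk eqxx.
apply: eq_bigr => F /and3P[FE Fel /eqP Fk].
rewrite (eq_bigl (fun s => Fs s == F)); last first.
  move=> s; apply/idP/idP => [/andP[_ ->] //|/eqP sF].
  by rewrite sF FE eqxx andbT -(Vset_Fs s) sF Fk eqxx.
rewrite (perF_sum hmg FE Fel Fk).
set t := #|comps F|.
have -> : l_p (Nmat adj arc) F = #|[set C in comps F | P1 adj arc F C]| by [].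
have -> : l_n (Nmat adj arc) F = #|[set C in comps F | Pm1 adj arc F C]| by [].
have -> : l_sn (Nmat adj arc) F = #|[set C in comps F | Psn adj arc F C]| by [].
set p := #|[set C in comps F | P1 adj arc F C]|.
set m := #|[set C in comps F | Pm1 adj arc F C]|.
set q := #|[set C in comps F | Psn adj arc F C]|.
have ez : (- (k%:Z) + rk F + q%:Z + m%:Z) = (q + m)%N%:Z - t%:Z.
  by rewrite /rk Fk -/t PoszD; ring.
rewrite ez expfzDr ?oppr_eq0 ?oner_eq0 // -exprnP -exprnN invr_sign.
have -> : (-2 : algC) = -1 * 2 by rewrite mulN1r.
rewrite exprMn !exprD.
move: ((-1) ^+ t : algC) ((-1) ^+ m : algC) ((-1) ^+ q : algC) (2 ^+ p : algC) (2 ^+ m : algC) => x1 x2 x3 x4 x5.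
ring.

Qed.
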